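(* Let $a>b\geq c>d>0$ be real numbers and define $g:\mathbb{R}\to\mathbb{R}$ by $$g(x)=\ln\frac{a^x-b^x}{c^x-d^x}\quad (x\neq 0),\qquad g(0)=\ln\frac{\ln(a/b)}{\ln(c/d)}.$$ Then $g$ is strictly convex on $\mathbb{R}$ if $ad-bc>0$, and strictly concave on $\mathbb{R}$ if $ad-bc<0$. If $ad-bc=0$, then $g$ is a linear function (namely $g(x)=x\ln\frac{b}{d}$).
   Context: The value $g(0)$ is the continuous extension of the expression $\ln\frac{a^x-b^x}{c^x-d^x}$ at $x=0$. *)

(* Defs.v *)
From Stdlib Require Import Reals.
Open Scope R_scope.

Definition g (a b c d : R) (x : R) : R :=
  if Req_EM_T x 0 then ln (ln (a / b) / ln (c / d))
  else ln ((Rpower a x - Rpower b x) / (Rpower c x - Rpower d x)).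

Definition strictly_convex (f : R -> R) : Prop :=
  forall x y t : R, x <> y -> 0 < t < 1 ->
    f (t * x + (1 - t) * y) < t * f x + (1 - t) * f y.

Definition strictly_concave (f : R -> R) : Prop :=
  forall x y t : R, x <> y -> 0 < t < 1 ->
    f (t * x + (1 - t) * y) > t * f x + (1 - t) * f y.

(* Main.v *)
From Coquelicot Require Import Coquelicot.
From Stdlib Require Import Reals Lra Psatz.
Require Import Defs.
Open Scope R_scope.


Section Abs.
Variables (f df : R -> R).
Hypothesis Hc : forall x, continuity_pt f x.
Hypothesis Hd : forall x, x <> 0 -> is_derive f x (df x).
Hypothesis Hi : forall x y, x < y -> df x < df y.

Lemma dfle x y : x <= y -> df x <= df y.
Proof. intros [H|H]; [apply Rlt_le, Hi; auto| subst; lra]. Qed.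

Lemma mvt_nz p q : p < q -> (0 <= p \/ q <= 0) ->
  exists c, p <= c <= q /\ f q - f p = df c * (q - p).
Proof.
  intros Hpq H0.
  destruct (MVT_gen f p q df) as [c [Hc1 Hc2]].
  - rewrite Rmin_left, Rmax_right by lra. intros x Hx. apply Hd. lra.
  - rewrite Rmin_left, Rmax_right by lra. intros x _. apply Hc.
  - rewrite Rmin_left, Rmax_right in Hc1 by lra. exists c; auto.
Qed.

Lemma slope_bounds p q : p < q ->
  df p * (q - p) <= f q - f p <= df q * (q - p).
Proof.
  intros Hpq.
  destruct (Rle_or_lt 0 p) as [H0|H0].
  { destruct (mvt_nz p q) as [c [Hc1 Hc2]]; auto.
    pose proof (dfle p c ltac:(lra)). pose proof (dfle c q ltac:(lra)).
    rewrite Hc2; split; apply Rmult_le_compat_r; lra. }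
  destruct (Rle_or_lt q 0) as [H1|H1].
  { destruct (mvt_nz p q) as [c [Hc1 Hc2]]; auto.
    pose proof (dfle p c ltac:(lra)). pose proof (dfle c q ltac:(lra)).
    rewrite Hc2; split; apply Rmult_le_compat_r; lra. }
  destruct (mvt_nz p 0) as [c [Hc1 Hc2]]; try lra.
  destruct (mvt_nz 0 q) as [e [He1 He2]]; try lra.
  pose proof (dfle p c ltac:(lra)). pose proof (dfle c q ltac:(lra)).
  pose proof (dfle p e ltac:(lra)). pose proof (dfle e q ltac:(lra)).
  replace (f q - f p) with ((f q - f 0) + (f 0 - f p)) by ring.
  rewrite Hc2, He2.
  split; nra.
Qed.

Lemma conv_lt x y t : x < y -> 0 < t < 1 ->
    f (t * x + (1 - t) * y) < t * f x + (1 - t) * f y.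
Proof.
  intros Hxy Ht.
  set (z := t * x + (1 - t) * y).
  assert (Hz1 : x < z) by (unfold z; nra).
  assert (Hz2 : z < y) by (unfold z; nra).
  set (m := (x + z) / 2).
  destruct (slope_bounds x m ltac:(unfold m; lra)) as [_ A1].
  destruct (slope_bounds m z ltac:(unfold m; lra)) as [_ A2].
  destruct (slope_bounds z y ltac:(lra)) as [A3 _].
  pose proof (Hi m z ltac:(unfold m; lra)) as Hmz.
  assert (Hfz : f z - f x < df z * (z - x)).
  { assert (df m * (m - x) < df z * (m - x)) by (apply Rmult_lt_compat_r; unfold m in *; lra).
    replace (z - x) with ((m - x) + (z - m)) by ring. lra. }
  assert (E : t * (z - x) = (1 - t) * (y - z)) by (unfold z; ring).
  assert (t * (f z - f x) < t * (df z * (z - x))) by (apply Rmult_lt_compat_l; lra).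
  assert ((1 - t) * (df z * (y - z)) <= (1 - t) * (f y - f z)) by (apply Rmult_le_compat_l; lra).
  assert (t * (df z * (z - x)) = (1 - t) * (df z * (y - z))) by (transitivity (df z * (t * (z - x))); [ring | rewrite E; ring]).
  lra.
Qed.

Lemma conv_abs : strictly_convex f.
Proof.
  intros x y t Hxy Ht.
  destruct (Rlt_or_le x y) as [H|H].
  - apply conv_lt; auto.
  - assert (y < x) by (destruct H; auto; congruence).
    pose proof (conv_lt y x (1 - t) H0 ltac:(lra)).
    replace (t * x + (1 - t) * y) with ((1 - t) * y + (1 - (1 - t)) * x) by ring.
    lra.
Qed.
End Abs.

Lemma der_cont f x l : is_derive f x l -> continuity_pt f x.
Proof. intros H; apply is_derive_Reals in H. apply derivable_continuous_pt. exists l; exact H. Qed.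

Lemma strict_incr (h dh : R -> R) a b : a < b ->
  (forall x, a <= x <= b -> is_derive h x (dh x)) ->
  (forall x, a <= x <= b -> 0 <= dh x) ->
  (forall x, a < x <= b -> 0 < dh x) -> h a < h b.
Proof.
  intros Hab Hd H0 H1.
  set (m := (a + b) / 2).
  destruct (MVT_gen h a m dh) as [c [Hc1 Hc2]].
  { rewrite Rmin_left, Rmax_right by (unfold m; lra). intros; apply Hd; unfold m in *; lra. }
  { rewrite Rmin_left, Rmax_right by (unfold m; lra). intros; eapply der_cont; apply Hd; unfold m in *; lra. }
  destruct (MVT_gen h m b dh) as [e [He1 He2]].
  { rewrite Rmin_left, Rmax_right by (unfold m; lra). intros; apply Hd; unfold m in *; lra. }
  { rewrite Rmin_left, Rmax_right by (unfold m; lra). intros; eapply der_cont; apply Hd; unfold m in *; lra. }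
  rewrite Rmin_left, Rmax_right in Hc1, He1 by (unfold m; lra).
  assert (0 <= dh c) by (apply H0; unfold m in *; lra).
  assert (0 < dh e) by (apply H1; unfold m in *; lra).
  assert (0 <= dh c * (m - a)) by (apply Rmult_le_pos; unfold m; lra).
  assert (0 < dh e * (b - m)) by (apply Rmult_lt_0_compat; unfold m; lra).
  lra.
Qed.

Definition Sf t := exp t - exp (- t).

Lemma exp_opp_mul t : exp t * exp (- t) = 1.
Proof. rewrite <- exp_plus; replace (t + - t) with 0 by ring; apply exp_0. Qed.

Lemma Sf_pos t : 0 < t -> 0 < Sf t.
Proof. intros; unfold Sf; pose proof (exp_increasing (-t) t ltac:(lra)); lra. Qed.

Lemma Sf_opp t : Sf (- t) = - Sf t.
Proof. unfold Sf; rewrite Ropp_involutive; ring. Qed.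

Lemma Sf_neg t : t < 0 -> Sf t < 0.
Proof. intros; replace t with (- - t) by ring; rewrite Sf_opp; pose proof (Sf_pos (-t)); lra. Qed.

Lemma Sf_nz t : t <> 0 -> Sf t <> 0.
Proof. intros H; destruct (Rlt_or_le t 0) as [H'|H'].
  pose proof (Sf_neg t H'); lra. pose proof (Sf_pos t ltac:(lra)); lra. Qed.

Lemma cosh_id x : exp x + exp (- x) - 2 = (exp x - 1) ^ 2 / exp x.
Proof. rewrite exp_Ropp. field. apply Rgt_not_eq, exp_pos. Qed.

Lemma cosh_ge x : 0 <= exp x + exp (- x) - 2.
Proof. rewrite cosh_id. apply Rle_mult_inv_pos; [apply pow2_ge_0|apply exp_pos]. Qed.

Lemma cosh_gt x : 0 < x -> 0 < exp x + exp (- x) - 2.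
Proof. intros Hx. rewrite cosh_id. pose proof (exp_increasing 0 x Hx). rewrite exp_0 in *.
  apply Rdiv_lt_0_compat; [|apply exp_pos]. apply pow_lt; lra. Qed.

Lemma F2 u : 0 < u -> 2 * u < Sf u.
Proof.
  intros Hu.
  assert (H := strict_incr (fun u => Sf u - 2 * u) (fun u => exp u + exp (- u) - 2) 0 u Hu).
  simpl in H. unfold Sf in *. rewrite Ropp_0, exp_0 in H.
  cut (0 < exp u - exp (- u) - 2 * u); [lra|]. replace 0 with (1 - 1 - 2 * 0) at 1 by ring.
  apply H.
  - intros x _. auto_derive; try exact I; try ring.
  - intros x _. apply cosh_ge.
  - intros x Hx. apply cosh_gt; lra.
Qed.

Lemma F3 t : 0 < t -> Sf t < t * (exp t + exp (- t)).
Proof.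
  intros Ht.
  assert (H := strict_incr (fun t => t * (exp t + exp (- t)) - Sf t) (fun t => t * Sf t) 0 t Ht).
  simpl in H. unfold Sf in *. rewrite Ropp_0, exp_0 in H.
  cut (0 < t * (exp t + exp (- t)) - (exp t - exp (- t))); [lra|].
  replace 0 with (0 * (1 + 1) - (1 - 1)) at 1 by ring.
  apply H.
  - intros x _. auto_derive; try exact I; try ring.
  - intros x Hx. destruct (proj1 Hx). apply Rlt_le, Rmult_lt_0_compat; auto. apply Sf_pos; auto.
    subst; lra.
  - intros x Hx. apply Rmult_lt_0_compat; [lra|]. apply Sf_pos; lra.
Qed.

Lemma incr_pos (h dh : R -> R) :
  (forall x, 0 < x -> is_derive h x (dh x)) -> (forall x, 0 < x -> 0 < dh x) ->
  forall s t, 0 < s -> s < t -> h s < h t.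
Proof.
  intros Hd Hp s t Hs Hst. apply (strict_incr h dh s t Hst).
  - intros; apply Hd; lra.
  - intros; apply Rlt_le, Hp; lra.
  - intros; apply Hp; lra.
Qed.

Definition Cf s := (exp s + exp (- s)) / (exp s - exp (- s)).

Lemma Sf_double t : (exp t + exp (- t)) * Sf t = Sf (2 * t).
Proof. unfold Sf. replace (2 * t) with (t + t) by ring. replace (- (t + t)) with (- t + - t) by ring.
  rewrite !exp_plus. pose proof (exp_opp_mul t). nra. Qed.

Lemma W_incr s t : 0 < s -> s < t -> s * Cf s < t * Cf t.
Proof.
  apply (incr_pos (fun t => t * Cf t) (fun t => ((exp t + exp (- t)) * Sf t - 4 * t) / (Sf t) ^ 2)).
  - intros x Hx. pose proof (Sf_pos x Hx) as HS. unfold Cf, Sf in *. auto_derive.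
    + lra.
    + rewrite !exp_Ropp. field. pose proof (exp_pos x) as Ep. rewrite exp_Ropp in HS.
      split; [lra|].
      assert (E1 : exp x * (exp x - / exp x) = exp x * exp x - 1) by (field; lra).
      assert (0 < exp x * (exp x - / exp x)) by (apply Rmult_lt_0_compat; lra). lra.
  - intros x Hx. apply Rdiv_lt_0_compat.
    + rewrite Sf_double. pose proof (F2 (2 * x) ltac:(lra)). lra.
    + pose proof (Sf_pos x Hx). apply pow_lt; lra.
Qed.

Lemma U_incr s t : 0 < s -> s < t -> Sf s / s < Sf t / t.
Proof.
  apply (incr_pos (fun t => Sf t / t) (fun t => (t * (exp t + exp (- t)) - Sf t) / t ^ 2)).
  - intros x Hx. unfold Sf. auto_derive.
    + lra.
    + field. lra.
  - intros x Hx. apply Rdiv_lt_0_compat.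
    + pose proof (F3 x Hx). lra.
    + apply pow_lt; lra.
Qed.

Lemma Sf_nz2 s : s <> 0 -> exp s * exp s - 1 <> 0.
Proof.
  intros H E. assert (exp s * exp s = exp 0) by (rewrite exp_0; lra).
  rewrite <- exp_plus in H0. apply exp_inv in H0. lra.
Qed.

Lemma Cf_opp s : Cf (- s) = - Cf s.
Proof. unfold Cf. rewrite Ropp_involutive.
  destruct (Req_dec s 0) as [->|H].
  - rewrite Ropp_0, Rminus_diag, !Rdiv_0_r; ring.
  - rewrite !exp_Ropp. field. pose proof (Sf_nz2 s H). pose proof (exp_pos s).
    repeat split; lra.
Qed.

Lemma ratio_pos al be x : 0 < al -> 0 < be -> x <> 0 -> 0 < Sf (al * x) / Sf (be * x).
Proof.
  intros Ha Hb Hx. destruct (Rlt_or_le x 0) as [H|H].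
  - pose proof (Sf_neg (al * x) ltac:(nra)). pose proof (Sf_neg (be * x) ltac:(nra)).
    replace (Sf (al * x) / Sf (be * x)) with ((- Sf (al * x)) / (- Sf (be * x))) by (field; lra).
    apply Rdiv_lt_0_compat; lra.
  - pose proof (Sf_pos (al * x) ltac:(nra)). pose proof (Sf_pos (be * x) ltac:(nra)).
    apply Rdiv_lt_0_compat; lra.
Qed.

Definition M al be x := if Req_EM_T x 0 then ln (al / be) else ln (Sf (al * x) / Sf (be * x)).
Definition dM al be x := if Req_EM_T x 0 then 0 else al * Cf (al * x) - be * Cf (be * x).

Section Core.
Variables al be : R.
Hypothesis Hb : 0 < be.
Hypothesis Hab : be < al.

Lemma dM_opp x : dM al be (- x) = - dM al be x.
Proof.
  unfold dM. destruct (Req_EM_T (- x) 0); destruct (Req_EM_T x 0); try lra.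
  replace (al * - x) with (- (al * x)) by ring. replace (be * - x) with (- (be * x)) by ring.
  rewrite !Cf_opp. ring.
Qed.

Lemma dM_pos x : 0 < x -> 0 < dM al be x.
Proof.
  intros Hx. unfold dM. destruct (Req_EM_T x 0); try lra.
  pose proof (W_incr (be * x) (al * x) ltac:(nra) ltac:(nra)).
  apply (Rmult_lt_reg_r x); [lra|]. nra.
Qed.

Lemma dM_incr_pos x y : 0 < x -> x < y -> dM al be x < dM al be y.
Proof.
  intros Hx Hxy. unfold dM. destruct (Req_EM_T x 0); destruct (Req_EM_T y 0); try lra.
  apply (incr_pos (fun x => al * Cf (al * x) - be * Cf (be * x))
    (fun x => 4 * be ^ 2 / (Sf (be * x)) ^ 2 - 4 * al ^ 2 / (Sf (al * x)) ^ 2)); auto.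
  - intros z Hz. unfold Cf, Sf. auto_derive.
    + pose proof (Sf_pos (be * z) ltac:(nra)). pose proof (Sf_pos (al * z) ltac:(nra)).
      unfold Sf in *. split; [lra|split; [lra|exact I]].
    + rewrite !exp_Ropp. field.
      pose proof (exp_pos (al * z)). pose proof (exp_pos (be * z)).
      pose proof (Sf_nz2 (al * z) ltac:(nra)). pose proof (Sf_nz2 (be * z) ltac:(nra)).
      repeat split; try lra.
  - intros z Hz.
    pose proof (U_incr (be * z) (al * z) ltac:(nra) ltac:(nra)) as HU.
    pose proof (Sf_pos (be * z) ltac:(nra)). pose proof (Sf_pos (al * z) ltac:(nra)).
    assert (K : al * Sf (be * z) < be * Sf (al * z)).
    { apply (Rmult_lt_reg_r (/ z)); [apply Rinv_0_lt_compat; lra|].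
      replace (al * Sf (be * z) * / z) with (Sf (be * z) / (be * z) * (al * be)) by (field; lra).
      replace (be * Sf (al * z) * / z) with (Sf (al * z) / (al * z) * (al * be)) by (field; lra).
      apply Rmult_lt_compat_r; nra. }
    assert (K2 : al / Sf (al * z) < be / Sf (be * z)).
    { apply (Rmult_lt_reg_r (Sf (al * z) * Sf (be * z))); [nra|].
      replace (al / Sf (al * z) * (Sf (al * z) * Sf (be * z))) with (al * Sf (be * z)) by (field; lra).
      replace (be / Sf (be * z) * (Sf (al * z) * Sf (be * z))) with (be * Sf (al * z)) by (field; lra).
      lra. }
    assert (0 < al / Sf (al * z)) by (apply Rdiv_lt_0_compat; lra).
    replace (4 * be ^ 2 / Sf (be * z) ^ 2 - 4 * al ^ 2 / Sf (al * z) ^ 2) with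
      (4 * ((be / Sf (be * z)) ^ 2 - (al / Sf (al * z)) ^ 2)) by (field; lra).
    nra.
Qed.

Lemma dM_incr x y : x < y -> dM al be x < dM al be y.
Proof.
  intros Hxy.
  destruct (Rlt_or_le 0 x) as [Hx|Hx]; [apply dM_incr_pos; auto|].
  destruct (Rlt_or_le y 0) as [Hy|Hy].
  - pose proof (dM_incr_pos (- y) (- x) ltac:(lra) ltac:(lra)). rewrite !dM_opp in H. lra.
  - assert (dM al be x <= 0).
    { destruct Hx as [Hx|Hx].
      - rewrite <- (Ropp_involutive x), dM_opp. pose proof (dM_pos (- x) ltac:(lra)). lra.
      - subst. unfold dM. destruct (Req_EM_T 0 0); lra. }
    assert (0 <= dM al be y).
    { destruct Hy as [Hy|Hy].
      - pose proof (dM_pos y Hy). lra.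
      - subst. unfold dM. destruct (Req_EM_T 0 0); lra. }
    destruct Hx as [Hx|Hx]; [|destruct Hy as [Hy|Hy]].
    + rewrite <- (Ropp_involutive x), dM_opp. pose proof (dM_pos (- x) ltac:(lra)). lra.
    + pose proof (dM_pos y Hy). lra.
    + lra.
Qed.
End Core.

Section Core2.
Variables al be : R.
Hypothesis Ha : 0 < al.
Hypothesis Hb : 0 < be.

Lemma M_der x : x <> 0 -> is_derive (M al be) x (dM al be x).
Proof.
  intros Hx.
  apply is_derive_ext_loc with (f := fun y => ln (Sf (al * y) / Sf (be * y))).
  - exists (mkposreal _ (Rabs_pos_lt x Hx)). intros y Hy.
    unfold ball in Hy; simpl in Hy; unfold AbsRing_ball, abs, minus, plus, opp in Hy; simpl in Hy.
    unfold M. destruct (Req_EM_T y 0); auto.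
    subst. rewrite Rplus_0_l, Rabs_Ropp in Hy. lra.
  - unfold dM. destruct (Req_EM_T x 0); [contradiction|].
    pose proof (ratio_pos al be x Ha Hb Hx) as HR.
    pose proof (Sf_nz (be * x) ltac:(intro; apply Hx; nra)) as N1.
    pose proof (Sf_nz (al * x) ltac:(intro; apply Hx; nra)) as N2.
    unfold Cf, Sf in *. auto_derive.
    + split; [exact N1|split; [exact HR|exact I]].
    + field. split; lra.
Qed.

Definition Dq (k : R) x := if Req_EM_T x 0 then 2 * k else Sf (k * x) / x.

Lemma Dq_cont k : continuity_pt (Dq k) 0.
Proof.
  assert (HD : derivable_pt_lim (fun x => Sf (k * x)) 0 (2 * k)).
  { apply is_derive_Reals. unfold Sf. auto_derive; auto.
    rewrite Rmult_0_r, Ropp_0, exp_0. ring. }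
  intros eps Heps. destruct (HD eps Heps) as [del Hdel].
  exists del. split; [apply cond_pos|].
  intros x [[_ Hx0] Hx]. simpl in Hx |- *. unfold R_dist in *. rewrite Rminus_0_r in Hx.
  unfold Dq. destruct (Req_EM_T 0 0); [|lra]. destruct (Req_EM_T x 0); [congruence|].
  specialize (Hdel x ltac:(auto) Hx).
  rewrite Rplus_0_l, Rmult_0_r in Hdel. unfold Sf in Hdel at 2. rewrite Ropp_0, exp_0 in Hdel.
  replace ((Sf (k * x) - (1 - 1)) / x) with (Sf (k * x) / x) in Hdel by (field; auto).
  exact Hdel.
Qed.

Lemma M_cont x : continuity_pt (M al be) x.
Proof.
  destruct (Req_dec x 0) as [->|Hx].
  2: { eapply der_cont; apply M_der; auto. }
  apply continuity_pt_ext with (f := comp ln (fun x => Dq al x / Dq be x)).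
  - intros y. unfold comp, M, Dq. destruct (Req_EM_T y 0).
    + f_equal. field. lra.
    + f_equal. field. split; auto. apply Sf_nz. intro; apply n; nra.
  - apply continuity_pt_comp.
    + apply continuity_pt_div; try apply Dq_cont.
      unfold Dq. destruct (Req_EM_T 0 0); lra.
    + eapply der_cont. unfold Dq. destruct (Req_EM_T 0 0); [|lra].
      auto_derive. apply Rdiv_lt_0_compat; lra. reflexivity.
Qed.
End Core2.

Lemma M_convex al be : 0 < be -> be < al -> strictly_convex (M al be).
Proof.
  intros Hb Hab. apply (conv_abs (M al be) (dM al be)).
  - apply M_cont; lra.
  - intros; apply M_der; lra.
  - intros; apply dM_incr; lra.
Qed.


Lemma M_swap al be x : 0 < al -> 0 < be -> M al be x = - M be al x.
Proof.
  intros Ha Hb. unfold M. destruct (Req_EM_T x 0).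
  - rewrite !ln_div by lra. ring.
  - pose proof (ratio_pos al be x Ha Hb n).
    replace (Sf (be * x) / Sf (al * x)) with (/ (Sf (al * x) / Sf (be * x))).
    + rewrite ln_Rinv by lra. ring.
    + field. split; apply Sf_nz; intro; apply n; nra.
Qed.

Lemma g_decomp a b c d x : a > b -> b > 0 -> c > d -> d > 0 ->
  g a b c d x = ((ln a + ln b) / 2 - (ln c + ln d) / 2) * x
     + M ((ln a - ln b) / 2) ((ln c - ln d) / 2) x.
Proof.
  intros Hab Hb Hcd Hd.
  pose proof (ln_increasing b a Hb Hab). pose proof (ln_increasing d c Hd Hcd).
  unfold g, M. destruct (Req_EM_T x 0) as [E|E].
  - subst. rewrite (ln_div a b), (ln_div c d) by lra. replace ((ln a - ln b) / (ln c - ln d)) with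
      ((ln a - ln b) / 2 / ((ln c - ln d) / 2)) by (field; lra). ring.
  - unfold Rpower.
    set (al := (ln a - ln b) / 2). set (be := (ln c - ln d) / 2).
    set (m := (ln a + ln b) / 2). set (n := (ln c + ln d) / 2).
    assert (E1 : exp (x * ln a) - exp (x * ln b) = exp (m * x) * Sf (al * x)).
    { unfold Sf. rewrite Rmult_minus_distr_l, <- !exp_plus.
      replace (m * x + al * x) with (x * ln a) by (unfold m, al; field).
      replace (m * x + - (al * x)) with (x * ln b) by (unfold m, al; field). ring. }
    assert (E2 : exp (x * ln c) - exp (x * ln d) = exp (n * x) * Sf (be * x)).
    { unfold Sf. rewrite Rmult_minus_distr_l, <- !exp_plus.
      replace (n * x + be * x) with (x * ln c) by (unfold n, be; field).
      replace (n * x + - (be * x)) with (x * ln d) by (unfold n, be; field). ring. }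
    rewrite E1, E2.
    assert (0 < al) by (unfold al; lra). assert (0 < be) by (unfold be; lra).
    pose proof (ratio_pos al be x ltac:(lra) ltac:(lra) E).
    pose proof (Sf_nz (be * x) ltac:(intro; apply E; nra)).
    replace (exp (m * x) * Sf (al * x) / (exp (n * x) * Sf (be * x))) with
      (exp ((m - n) * x) * (Sf (al * x) / Sf (be * x))).
    + rewrite ln_mult, ln_exp; [ring | apply exp_pos | lra].
    + replace ((m - n) * x) with (m * x + - (n * x)) by ring. rewrite exp_plus, exp_Ropp.
      field. split; auto. apply Rgt_not_eq, exp_pos.
Qed.

Theorem theorem2p1 (a b c d : R) (hab : a > b) (hbc : b >= c) (hcd : c > d) (hd : d > 0) :
  (a * d - b * c > 0 -> strictly_convex (g a b c d)) /\
  (a * d - b * c < 0 -> strictly_concave (g a b c d)) /\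
  (a * d - b * c = 0 -> forall x : R, g a b c d x = x * ln (b / d)).
Proof.
  assert (Hb : b > 0) by lra. assert (Hc : c > 0) by lra. assert (Ha : a > 0) by lra.
  pose proof (ln_increasing b a Hb hab) as L1. pose proof (ln_increasing d c hd hcd) as L2.
  set (al := (ln a - ln b) / 2). set (be := (ln c - ln d) / 2).
  set (K := (ln a + ln b) / 2 - (ln c + ln d) / 2).
  assert (Hal : 0 < al) by (unfold al; lra). assert (Hbe : 0 < be) by (unfold be; lra).
  assert (Hg : forall x, g a b c d x = K * x + M al be x) by (intro; apply g_decomp; lra).
  assert (Hln : forall u v, 0 < u -> 0 < v -> ln (u * v) = ln u + ln v) by (intros; apply ln_mult; auto).
  repeat split.
  - intros Hs x y t Hxy Ht. rewrite !Hg.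
    assert (Hlt : be < al).
    { assert (Q : ln (b * c) < ln (a * d)) by (apply ln_increasing; nra).
      rewrite !Hln in Q by lra. unfold al, be; lra. }
    pose proof (M_convex al be Hbe Hlt x y t Hxy Ht). nra.
  - intros Hs x y t Hxy Ht. rewrite !Hg.
    assert (Hlt : al < be).
    { assert (Q : ln (a * d) < ln (b * c)) by (apply ln_increasing; nra).
      rewrite !Hln in Q by lra. unfold al, be; lra. }
    pose proof (M_convex be al Hal Hlt x y t Hxy Ht).
    rewrite !(M_swap al be) by lra. nra.
  - intros Hs x. rewrite Hg.
    assert (E : ln a + ln d = ln b + ln c).
    { rewrite <- !Hln by lra. f_equal. lra. }
    assert (Heq : al = be) by (unfold al, be; lra).
    assert (HM : M al be x = 0).
    { rewrite <- Heq. unfold M. destruct (Req_EM_T x 0) as [_|n].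
      - replace (al / al) with 1 by (field; lra). apply ln_1.
      - replace (Sf (al * x) / Sf (al * x)) with 1. apply ln_1.
        field. apply Sf_nz. intro; apply n; nra. }
    rewrite HM, ln_div by lra. replace K with (ln b - ln d) by (unfold K; lra). ring.
Qed.
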